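(* For $n>4$, the 1-skeleton of the network space $\mathfrak S_n$ is the complete graph on $\delta=2^{n-1}-n-1$ vertices.
   Context: $X$ is a set of $n$ labels. A split of $X$ is an unordered partition of $X$ into two nonempty sets; it is trivial if one part is a singleton. A circular ordering of $X$ is a cyclic arrangement $\pi=(x_1,\dots,x_n)$ up to rotation and reflection; a split is circular w.r.t. $\pi$ if it has the form $\{\{x_{i+1},\dots,x_j\},X\setminus\{x_{i+1},\dots,x_j\}\}$ (indices mod $n$). Give $\mathbb R^\delta$ coordinates indexed by the nontrivial splits. For each circular ordering $\pi$, $O_\pi$ is the set of nonnegative vectors supported on splits circular w.r.t. $\pi$, and the chamber $\Delta_\pi=O_\pi\cap\{\sum_s x_s=1\}$. The network space is $\mathfrak S_n=\bigcup_\pi\Delta_\pi$, a simplicial complex whose simplices are the faces of the chambers; its vertices are the unit vectors of nontrivial splits. *)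

(* Defs.v *)
From HB Require Import structures.
From mathcomp Require Import all_boot all_order all_fingroup.
Set Implicit Arguments. Unset Strict Implicit. Unset Printing Implicit Defensive.

(* Labels X = 'I_n.  A split is an unordered partition {A, X\A}, represented
   as the two-element set of sets [set A; ~: A]. *)
Definition split_of (n : nat) (A : {set 'I_n}) : {set {set 'I_n}} := [set A; ~: A].

Definition nt_splits (n : nat) : {set {set {set 'I_n}}} :=
  [set split_of A | A in [set A : {set 'I_n} | (2 <= #|A|) && (2 <= #|~: A|)]].

(* A circular ordering is given by a bijection pi : 'I_n -> 'I_n,
   x_i := pi i.  The cyclic interval {x_i, x_(i+1), ..., x_(i+k-1)} (indices
   mod n). *)
Definition cyc_interval (n : nat) (pi : {perm 'I_n}) (i : 'I_n) (k : nat)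
  : {set 'I_n} :=
  [set pi j | j in [set j : 'I_n | (j + n - i) %% n < k]].

Definition circular (n : nat) (pi : {perm 'I_n}) (S : {set {set 'I_n}}) : Prop :=
  exists (i : 'I_n) (k : nat), cyc_interval pi i k \in S.

(* Simplices of the network space: sets of nontrivial splits all circular
   w.r.t. one common circular ordering (faces of a chamber Delta_pi). *)
Definition simplex (n : nat) (F : {set {set {set 'I_n}}}) : Prop :=
  F \subset nt_splits n /\
  exists pi : {perm 'I_n}, forall S, S \in F -> circular pi S.

Definition edge (n : nat) (S T : {set {set 'I_n}}) : Prop :=
  S != T /\ simplex [set S; T].

(* Main.v *)
Require Import Defs.
From HB Require Import structures.
From mathcomp Require Import all_boot all_order all_fingroup zify.
Set Implicit Arguments. Unset Strict Implicit.

Lemma ind (c n : nat) : c <= n -> 4 < n ->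
  ((2 <= c) && (2 <= n - c) : nat) + (c == 0) + (c == 1) + (c == n - 1) + (c == n) = 1.
Proof. move=> h1 h2. lia. Qed.

Lemma cardP n (hn : 4 < n) :
  #|[set A : {set 'I_n} | (2 <= #|A|) && (2 <= #|~: A|)]| = 2 ^ n - 2 * n - 2.
Proof.
have E (Q : pred {set 'I_n}) : #|[set A | Q A]| = \sum_(A : {set 'I_n}) (Q A : nat).
  by rewrite -sum1_card big_mkcond; apply: eq_bigr => A _; rewrite inE; case: (Q A).
have T : 2 ^ n = \sum_(A : {set 'I_n}) 1.
  by rewrite sum1_card -cardsT -powersetT card_powerset cardsT card_ord.
have D k : #|[set A : {set 'I_n} | #|A| == k]| = 'C(n, k) by rewrite card_draws card_ord.
have Hs : 2 ^ n = #|[set A : {set 'I_n} | (2 <= #|A|) && (2 <= #|~: A|)]|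
   + #|[set A : {set 'I_n} | #|A| == 0]| + #|[set A : {set 'I_n} | #|A| == 1]|
   + #|[set A : {set 'I_n} | #|A| == n - 1]| + #|[set A : {set 'I_n} | #|A| == n]|.
  rewrite T !E -!big_split /=; apply: eq_bigr => A _.
  have hc := cardsC A; rewrite card_ord in hc.
  have -> : #|~: A| = n - #|A| by lia.
  by rewrite ind //; apply: leq_trans (max_card _) _; rewrite card_ord.
rewrite Hs !D bin0 bin1 binn bin_sub ?bin1; lia.
Qed.

Lemma splitC n (A : {set 'I_n}) : split_of (~: A) = split_of A.
Proof. by rewrite /split_of setCK setUC. Qed.

Lemma mem_split n (X A : {set 'I_n}) : X \in split_of A -> split_of X = split_of A.
Proof. by rewrite !inE => /orP[]/eqP->; rewrite ?splitC. Qed.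

Lemma count_part n (hn : 4 < n) : #|nt_splits n| = 2 ^ n.-1 - n - 1.
Proof.
set P := [set A : {set 'I_n} | (2 <= #|A|) && (2 <= #|~: A|)].
have x0 : 'I_n := Ordinal (leq_trans (isT : 1 <= 5) hn).
have PC A : A \in P -> ~: A \in P by rewrite !inE setCK andbC.
have part : partition (nt_splits n) P.
  apply/and3P; split.
  - apply/eqP/setP => X; apply/bigcupP/idP.
      case=> S /imsetP[A hA ->]; rewrite /split_of => /set2P[]->; first exact: hA.
      exact: PC.
    move=> hX; exists (split_of X); first by apply: imset_f.
    by rewrite !inE eqxx.
  - apply/trivIsetP => S1 S2 /imsetP[A _ ->] /imsetP[B _ ->] neq.
    apply/pred0P => X /=; apply/negbTE/andP => -[h1 h2]; move/eqP: neq; apply.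
    by rewrite -(mem_split h1) -(mem_split h2).
  - apply/imsetP => [[A _ h]].
    have : A \in set0 by rewrite h !inE eqxx.
    by rewrite inE.
have U : {in nt_splits n, forall S : {set {set 'I_n}}, #|S| = 2}.
  move=> S /imsetP[A _ ->]; rewrite cards2.
  suff -> : A != ~: A by [].
  apply/eqP => h; have : (x0 \in A) = (x0 \in ~: A) by rewrite -h.
  rewrite inE; by case: (x0 \in A).
have := card_uniform_partition U part.
have : 2 ^ n = 2 * 2 ^ n.-1 by rewrite -expnS prednK //; lia.
rewrite cardP //; lia.
Qed.

Lemma interval_char n (s : seq 'I_n) (Us : uniq s) (Ss : size s = n)
  (Hall : forall x, x \in s) (pi : {perm 'I_n})
  (Hpi : forall j : 'I_n, pi j = nth j s j) (i : 'I_n) k (hik : i + k <= n)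
  (x : 'I_n) : (x \in cyc_interval pi i k) = (i <= index x s < i + k).
Proof.
have md (j : 'I_n) : (j + n - i) %% n = if i <= j then j - i else j + n - i.
  have := ltn_ord j; have := ltn_ord i; case: ifP => hij hi hj.
    have -> : j + n - i = (j - i) + n by lia.
    by rewrite modnDr modn_small //; lia.
  by rewrite modn_small //; lia.
rewrite /cyc_interval; apply/imsetP/idP.
  case=> j; rewrite inE md => hj ->; rewrite Hpi index_uniq ?Ss //.
  by move: hj; case: ifP => ?; lia.
move=> hx.
have hxn : index x s < n by move: (Hall x); rewrite -index_mem Ss.
exists (Ordinal hxn); last by rewrite Hpi /= nth_index.
rewrite inE md /=; case: ifP => ?; lia.
Qed.

Lemma hasE (T : finType) (X Y : {set T}) :
  (forall x, x \in X -> x \in Y -> False) -> has (mem (enum X)) (enum Y) = false.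
Proof. move=> h; apply/hasPn => x; rewrite mem_enum => hy; apply/negP; rewrite /= mem_enum => hx; exact: h x hx hy. Qed.

Lemma two_circ n (A B : {set 'I_n}) (hB : 2 <= #|~: B|) :
  exists pi : {perm 'I_n}, circular pi (split_of A) /\ circular pi (split_of B).
Proof.
set e1 := enum (A :&: B); set e2 := enum (A :&: ~: B).
set e3 := enum (~: A :&: ~: B); set e4 := enum (~: A :&: B).
set s := e1 ++ e2 ++ e3 ++ e4.
have Hall x : x \in s.
  by rewrite !mem_cat !mem_enum !inE; case: (x \in A); case: (x \in B).
have Us : uniq s.
  rewrite !cat_uniq !enum_uniq /e1 /e2 /e3 /e4 !has_cat !hasE // => x; rewrite !inE; by case: (x \in A); case: (x \in B).
have Ss : size s = n.
  have := perm_size (uniq_perm Us (enum_uniq 'I_n) (fun x => ltac:(by rewrite Hall mem_enum))).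
  by rewrite size_enum_ord.
have finj : injective (fun j : 'I_n => nth j s j).
  move=> j1 j2 /= h; apply/val_inj; apply/eqP.
  have h1 : j1 < size s by rewrite Ss.
  have h2 : j2 < size s by rewrite Ss.
  rewrite (set_nth_default j1 j2) // in h.
  by rewrite -(nth_uniq j1 h1 h2 Us) h.
pose pi := perm finj.
have Hpi (j : 'I_n) : pi j = nth j s j by rewrite permE.
have I x (X : {set 'I_n}) : x \in X -> index x (enum X) < size (enum X).
  by rewrite index_mem mem_enum.
have c23 : size e2 + size e3 = #|~: B|.
  rewrite /e2 /e3 -!cardE -(cardsID A (~: B)) setIC; congr (_ + _).
  by rewrite setDE setIC.
have hn : size e1 + size e2 + size e3 + size e4 = n by move: Ss; rewrite /s !size_cat; lia.
have key x : [/\ (x \in A) = (index x s < size e1 + size e2),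
    (x \in ~: B) = (size e1 <= index x s < size e1 + (size e2 + size e3)) &
    True].
  have I1 : x \in A :&: B -> index x e1 < size e1 by rewrite index_mem mem_enum.
  have I2 : x \in A :&: ~: B -> index x e2 < size e2 by rewrite index_mem mem_enum.
  have I3 : x \in ~: A :&: ~: B -> index x e3 < size e3 by rewrite index_mem mem_enum.
  have I4 : x \in ~: A :&: B -> index x e4 < size e4 by rewrite index_mem mem_enum.
  rewrite /s !index_cat.
  move: I1 I2 I3 I4; rewrite /e1 /e2 /e3 /e4 !mem_enum !inE.
  by case: (x \in A); case: (x \in B) => /= h1 h2 h3 h4; split => //; lia.
exists pi; split.
  have i0 : 0 < n by lia.
  exists (Ordinal i0), (size e1 + size e2); rewrite /split_of.
  suff -> : cyc_interval pi (Ordinal i0) (size e1 + size e2) = A by rewrite !inE eqxx.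
  apply/setP => x; rewrite (interval_char Us Ss Hall Hpi) /=; last by apply: leq_trans (eq_leq hn); rewrite add0n -!addnA leq_add2l leq_addr.
    by case: (key x).
have i1 : size e1 < n by lia.
exists (Ordinal i1), (size e2 + size e3); rewrite /split_of.
suff -> : cyc_interval pi (Ordinal i1) (size e2 + size e3) = ~: B by rewrite !inE eqxx orbT.
apply/setP => x; rewrite (interval_char Us Ss Hall Hpi) /=; last first.
  by apply: leq_trans (eq_leq hn); rewrite -!addnA !leq_add2l leq_addr.
by case: (key x).
Qed.

Theorem corollary8 (n : nat) (hn : 4 < n) :
  #|nt_splits n| = 2 ^ n.-1 - n - 1 /\
  (forall S T : {set {set 'I_n}},
      S \in nt_splits n -> T \in nt_splits n -> S != T -> edge S T).
Proof.
split; first exact: count_part.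
move=> S T hS hT neq; split => //; split.
  by apply/subsetP => X /set2P[]->.
case/imsetP: hS => A _ ->; case/imsetP: hT => B hB ->.
rewrite inE in hB; case/andP: hB => _ hB.
have [pi [h1 h2]] := two_circ A hB.
by exists pi => X /set2P[]->.
Qed.
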